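(* Let $F(a,b,c,d,A)=-2(a+c)-2\bigl[(ac+bd)\cos2A+(bc-ad)\sin2A\bigr]+a^2+b^2+c^2+d^2+1$ and $\mathbb S=F^{-1}(0)\subset\mathbb R^5$. Then $\mathbb S$ has singular points with $A=\pm\pi/2$.
   Context: Here $X_1=a+bi$, $X_2=c+di$ and $F=0$ is $-2\,\mathrm{Re}(X_1+X_2)-2\,\mathrm{Re}(X_1\overline{X}_2e^{-2iA})+|X_1|^2+|X_2|^2+1=0$ (the basic variety). A singular point of $\mathbb S$ is a point of $\mathbb S$ at which the gradient of $F$ vanishes. *)

(* Defs.v *)
From Stdlib Require Import Reals.
From Coquelicot Require Import Coquelicot.
Open Scope R_scope.

Definition F (a b c d A : R) : R :=
  -2 * (a + c) - 2 * ((a * c + b * d) * cos (2 * A) + (b * c - a * d) * sin (2 * A))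
  + a ^ 2 + b ^ 2 + c ^ 2 + d ^ 2 + 1.

Definition in_S (a b c d A : R) : Prop := F a b c d A = 0.

Definition singular_point (a b c d A : R) : Prop :=
  in_S a b c d A /\
  is_derive (fun t => F t b c d A) a 0 /\
  is_derive (fun t => F a t c d A) b 0 /\
  is_derive (fun t => F a b t d A) c 0 /\
  is_derive (fun t => F a b c t A) d 0 /\
  is_derive (fun t => F a b c d t) A 0.

(* Main.v *)
Require Import Defs.
From Stdlib Require Import Reals Lra.
From Coquelicot Require Import Coquelicot.
Open Scope R_scope.

Lemma sing_at (A : R) : cos (2 * A) = -1 -> sin (2 * A) = 0 ->
  singular_point 1 0 0 0 A.
Proof.
  intros Hc Hs. unfold singular_point, in_S, F.
  split; [rewrite Hc, Hs; ring|].
  split; [|split; [|split; [|split]]]; auto_derive; try easy; try rewrite Hc; try rewrite Hs; ring.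
Qed.

Theorem proposition3p5 :
  (exists a b c d : R, singular_point a b c d (PI / 2)) /\
  (exists a b c d : R, singular_point a b c d (- (PI / 2))).
Proof.
  split; exists 1, 0, 0, 0; apply sing_at.
  - replace (2 * (PI / 2)) with PI by field. apply cos_PI.
  - replace (2 * (PI / 2)) with PI by field. apply sin_PI.
  - replace (2 * - (PI / 2)) with (- PI) by field. rewrite cos_neg. apply cos_PI.
  - replace (2 * - (PI / 2)) with (- PI) by field. rewrite sin_neg, sin_PI. ring.
Qed.
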